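(* Let $\beta,\gamma\in(0,1]$ with $\beta\le\gamma$, let $f$ be a modulus function, $m\ge0$ an integer, $\theta=(k_r)$ a lacunary sequence, and $p=(p_k)$ a sequence of positive reals with $0<h=\inf_kp_k\le p_k\le\sup_kp_k=H<\infty$. Then $w_p^\beta(\theta,f,F,\Delta^m)\subset S_\theta^\gamma(F,\Delta^m)$.
   Context: A fuzzy number is a map $X:\mathbb{R}\to[0,1]$ which is normal, fuzzy convex, upper semicontinuous, with compact closure of $\{t:X(t)>0\}$; $L(\mathbb{R})$ is the set of fuzzy numbers. Level sets $[X]^\alpha=\{t:X(t)\ge\alpha\}$ ($\alpha\in(0,1]$), $[X]^0=\overline{\{t:X(t)>0\}}$, are compact intervals $[u^\alpha,v^\alpha]$. Subtraction: $[X-Y]^\alpha=[u_1^\alpha-v_2^\alpha,v_1^\alpha-u_2^\alpha]$. Metric: $d(X,Y)=\sup_{\alpha\in[0,1]}\max\{|u_1^\alpha-u_2^\alpha|,|v_1^\alpha-v_2^\alpha|\}$. $(\Delta^0X)_k=X_k$, $(\Delta^1X)_k=X_k-X_{k+1}$, $(\Delta^mX)_k=(\Delta^1(\Delta^{m-1}X))_k$. A lacunary sequence is an increasing integer sequence $\theta=(k_r)_{r\ge0}$ with $k_0=0$, $h_r=k_r-k_{r-1}\to\infty$; $I_r=(k_{r-1},k_r]$. A modulus function is $f:[0,\infty)\to[0,\infty)$ with $f(x)=0$ iff $x=0$, $f(x+y)\le f(x)+f(y)$, $f$ increasing, and $f$ right-continuous at $0$. $w_p^\beta(\theta,f,F,\Delta^m)$: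 sequences $X$ of fuzzy numbers with some $X_0\in L(\mathbb{R})$ such that $\lim_r\frac{1}{h_r^\beta}\sum_{k\in I_r}[f(d(\Delta^mX_k,X_0))]^{p_k}=0$. $S_\theta^\gamma(F,\Delta^m)$: sequences $X$ with some $X_0\in L(\mathbb{R})$ such that for all $\varepsilon>0$, $\lim_r\frac{1}{h_r^\gamma}|\{k\in I_r:d(\Delta^mX_k,X_0)\ge\varepsilon\}|=0$. *)

(* Defs.v *)
From HB Require Import structures.
From mathcomp Require Import all_boot all_order all_algebra.
From mathcomp Require Import all_classical all_reals all_analysis.
Set Implicit Arguments. Unset Strict Implicit. Unset Printing Implicit Defensive.
Import Order.TTheory GRing.Theory Num.Theory.
Import numFieldNormedType.Exports.
Local Open Scope classical_set_scope.
Local Open Scope ring_scope.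

Section Fuzzy.
Variable R : realType.

Definition is_fuzzy (X : R -> R) : Prop :=
  [/\ (forall t, 0 <= X t <= 1),
      (exists t, X t = 1),
      (forall s t l, 0 <= l <= 1 ->
          Num.min (X s) (X t) <= X (l * s + (1 - l) * t)),
      (forall t e, 0 < e -> \forall s \near t, X s < X t + e)
    & compact (closure [set t | 0 < X t])].

Definition levelset (X : R -> R) (a : R) : set R :=
  if a == 0 then closure [set t | 0 < X t] else [set t | a <= X t].

Definition lo (X : R -> R) (a : R) : R := inf (levelset X a).
Definition hi (X : R -> R) (a : R) : R := sup (levelset X a).

(* endpoints (u^alpha, v^alpha) of the level sets of (Delta^m X)_k, using
   [X - Y]^a = [u1^a - v2^a, v1^a - u2^a] *)
Fixpoint Dlevel (X : nat -> R -> R) (m k : nat) (a : R) : R * R :=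
  match m with
  | 0 => (lo (X k) a, hi (X k) a)
  | m'.+1 => ((Dlevel X m' k a).1 - (Dlevel X m' k.+1 a).2,
              (Dlevel X m' k a).2 - (Dlevel X m' k.+1 a).1)
  end.

Definition dDelta (X : nat -> R -> R) (m k : nat) (X0 : R -> R) : R :=
  sup [set Num.max `|(Dlevel X m k a).1 - lo X0 a| `|(Dlevel X m k a).2 - hi X0 a|
      | a in `[0, 1]].

Definition is_modulus (f : R -> R) : Prop :=
  [/\ (forall x, 0 <= x -> 0 <= f x),
      (forall x, 0 <= x -> (f x = 0 <-> x = 0)),
      (forall x y, 0 <= x -> 0 <= y -> f (x + y) <= f x + f y),
      (forall x y, 0 <= x -> x <= y -> f x <= f y)
    & f x @[x --> 0^'+] --> 0].

Definition hr (theta : nat -> nat) (r : nat) : nat := (theta r - theta r.-1)%N.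

Definition lacunary (theta : nat -> nat) : Prop :=
  [/\ theta 0 = 0%N,
      (forall r, (theta r < theta r.+1)%N)
    & (fun r => (hr theta r)%:R : R) @ \oo --> +oo].

Definition w_space (beta : R) (theta : nat -> nat) (f : R -> R) (p : nat -> R)
    (m : nat) : set (nat -> R -> R) :=
  [set X | (forall k, is_fuzzy (X k)) /\
    exists X0, is_fuzzy X0 /\
      (fun r => ((hr theta r)%:R `^ beta)^-1 *
         \sum_((theta r.-1).+1 <= k < (theta r).+1)
             (f (dDelta X m k X0)) `^ (p k)) @ \oo --> 0].

Definition S_space (gamma : R) (theta : nat -> nat) (m : nat)
    : set (nat -> R -> R) :=
  [set X | (forall k, is_fuzzy (X k)) /\
    exists X0, is_fuzzy X0 /\
      forall eps, 0 < eps ->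
      (fun r => ((hr theta r)%:R `^ gamma)^-1 *
         (count (fun k => eps <= dDelta X m k X0)
            (index_iota (theta r.-1).+1 (theta r).+1))%:R) @ \oo --> 0].

End Fuzzy.

(* Main.v *)
Require Import Defs.
From HB Require Import structures.
From mathcomp Require Import all_boot all_order all_algebra.
From mathcomp Require Import all_classical all_reals all_analysis.
Import Order.TTheory GRing.Theory Num.Theory.
Import numFieldNormedType.Exports.
Local Open Scope classical_set_scope.
Local Open Scope ring_scope.

Lemma count_sum_le (R : realType) (c : R) (P : pred nat) (g : nat -> R) (s : seq nat) :
  (forall k, 0 <= g k) -> (forall k, P k -> c <= g k) -> 0 <= c ->
  c * (count P s)%:R <= \sum_(k <- s) g k.
Proof.
move=> g0 gc c0; elim: s => [|x s IH]; first by rewrite big_nil mulr0.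
rewrite big_cons /= natrD mulrDr; apply: lerD => //.
case: (P x) (gc x) => [h|_] /=; first by rewrite mulr1; exact: h.
by rewrite mulr0.
Qed.

Lemma squeeze_helper (R : realType) (u w : nat -> R) (c : R) : 0 < c ->
  (\forall n \near \oo, 0 <= u n <= c^-1 * w n) -> w @ \oo --> 0 -> u @ \oo --> 0.
Proof.
move=> c0 hn cw.
apply: (@squeeze_cvgr _ _ _ _ (fun=> 0) (fun n => c^-1 * w n)) => //.
- exact: cvg_cst.
- have := @cvgMl_tmp _ _ _ _ _ c^-1 _ cw; rewrite mulr0 => H1; exact: H1.
Qed.

Theorem theorem3p2 (R : realType) (beta gamma : R) (f : R -> R) (m : nat)
    (theta : nat -> nat) (p : nat -> R) :
  0 < beta <= 1 -> 0 < gamma <= 1 -> beta <= gamma ->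
  is_modulus f -> lacunary R theta ->
  (forall k, 0 < p k) -> 0 < inf (range p) -> has_ubound (range p) ->
  w_space beta theta f p m `<=` S_space gamma theta m.
Proof.
move=> /andP[b0 b1] /andP[g0 g1] bg [f0 fz fsub fmon _] [th0 thinc _] p0 _ pub.
move=> X [fzX [X0 [fz0 cv]]]; split => //; exists X0; split => // eps eps0.
set H := sup (range p).
have pH k : p k <= H by apply: ub_le_sup => //; exists k.
have fe0 : 0 < f eps.
  rewrite lt_neqAle f0 ?ltW // andbT; apply/eqP => /esym /(fz _ (ltW eps0)) e.
  by rewrite e ltxx in eps0.
set c := Num.min 1 (f eps `^ H).
have c0 : 0 < c by rewrite lt_min ltr01 powR_gt0.
have key k : eps <= dDelta X m k X0 -> c <= f (dDelta X m k X0) `^ p k.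
  move=> ed.
  have d0 : 0 <= dDelta X m k X0 by apply: le_trans ed; apply: ltW.
  apply: (@le_trans _ _ (f eps `^ p k)); last first.
    apply: ge0_ler_powR; first exact: ltW.
    - by rewrite nnegrE ltW.
    - by rewrite nnegrE f0.
    - by apply: fmon => //; apply: ltW.
  case: (leP 1 (f eps)) => fe.
    rewrite ge_min; apply/orP; left.
    by rewrite -(powRr0 (f eps)); apply: ler_powR => //; apply: ltW.
  rewrite ge_min; apply/orP; right.
  by apply: ger_powR => //; rewrite fe0 ltW.
match type of cv with cvg_to (nbhs (fmap ?w _)) _ =>
  apply: (@squeeze_cvgr nat \oo _ R (fun=> 0) (fun r => c^-1 * w r)); last first;
  [ have := @cvgMl_tmp _ _ _ _ w c^-1 _ cv; rewrite mulr0 => H1; exact: (H1 _) | exact: cvg_cst | ] end.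
- near=> r.
  have r1 : (1 <= r)%N by near: r; exists 1%N.
  have h1 : (1 <= (hr theta r)%:R :> R).
    rewrite ler1n /hr subn_gt0; by have := thinc r.-1; rewrite prednK.
  have hb0 : 0 < (hr theta r)%:R `^ beta by apply: powR_gt0; apply: lt_le_trans h1.
  have hg0 : 0 < (hr theta r)%:R `^ gamma by apply: powR_gt0; apply: lt_le_trans h1.
  apply/andP; split.
    by apply: mulr_ge0; rewrite ?invr_ge0 ?powR_ge0.
  rewrite mulrCA; apply: (@le_trans _ _ (((hr theta r)%:R `^ beta)^-1 *
     (count (fun k => eps <= dDelta X m k X0)
            (index_iota (theta r.-1).+1 (theta r).+1))%:R)).
    apply: ler_wpM2r => //.
    rewrite ler_pV2 ?inE ?unitfE ?hb0 ?hg0 ?gt_eqF //.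
    exact: ler_powR.
  apply: ler_wpM2l; first by rewrite invr_ge0 ltW.
  rewrite -[X in X <= _](mulKf (lt0r_neq0 c0)); apply: ler_wpM2l; first by rewrite invr_ge0 ltW.
  apply: count_sum_le => //; last exact: ltW.
  by move=> k; apply: powR_ge0.
Unshelve. all: by end_near.
Qed.
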